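(* Let $n\geq 3$ and $\alpha_2,\dots,\alpha_n\in\mathbb{C}$ with $\alpha_2=0$ and $\alpha_3\neq0$. Then the transposed Poisson algebra $\mathbf{TP}(\alpha_2,\dots,\alpha_n)$ is isomorphic to $\mathbf{TP}(0,\alpha,0,\dots,0)$ for some $\alpha\in\mathbb{C}$.
   Context: $\mu_0^n$ is the complex commutative associative algebra with basis $\{e_1,\dots,e_n\}$ and $e_i\cdot e_j=e_{i+j}$ for $2\leq i+j\leq n$, other products zero. For $\alpha_2,\dots,\alpha_n\in\mathbb{C}$, $\mathbf{TP}(\alpha_2,\dots,\alpha_n)$ denotes $\mu_0^n$ with its associative product together with the bracket $[e_i,e_j]=(j-i)\sum_{t=i+j-1}^{n}\alpha_{t-i-j+3}e_t$ for $3\leq i+j\leq n+1$, other brackets of basis elements zero. In $\mathbf{TP}(0,\alpha,0,\dots,0)$ the parameter $\alpha$ is in the position of $\alpha_3$. Isomorphisms preserve both operations. *)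

(* Defs.v *)
From Stdlib Require Reals.
From mathcomp Require Import Rstruct.
From HB Require Import structures.
From mathcomp Require Import all_boot all_order all_algebra.
From mathcomp Require Import complex.
Set Implicit Arguments. Unset Strict Implicit. Unset Printing Implicit Defensive.
Import Order.TTheory GRing.Theory Num.Theory.
Local Open Scope ring_scope.

Notation CC := (complex Rdefinitions.R).

(* Elements of the n-dimensional algebra are row vectors x : 'rV[CC]_n;
   the coordinate x 0 i (i : 'I_n) is the coefficient of e_(i+1).
   Structure constants are indexed by 1-based naturals i j k in 1..n. *)

Definition mu0_const (n i j k : nat) : CC :=
  if (i + j <= n)%N && (k == i + j)%N then 1 else 0.

(* TP(alpha_2,...,alpha_n): [e_i,e_j] = (j-i) sum_(t=i+j-1)^n alpha_(t-i-j+3) e_t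
   for 3 <= i + j <= n + 1; alpha : nat -> CC with alpha k = alpha_k
   (only the values alpha 2, ..., alpha n are ever used). *)
Definition tp_const (alpha : nat -> CC) (n i j k : nat) : CC :=
  if [&& (3 <= i + j)%N, (i + j <= n.+1)%N, ((i + j).-1 <= k)%N & (k <= n)%N]
  then (j%:R - i%:R) * alpha (k + 3 - (i + j))%N
  else 0.

Definition bilin (n : nat) (c : nat -> nat -> nat -> CC) (x y : 'rV[CC]_n)
  : 'rV[CC]_n :=
  \row_(k < n) \sum_(i < n) \sum_(j < n) x 0 i * y 0 j * c i.+1 j.+1 k.+1.

Definition tp_mul (n : nat) : 'rV[CC]_n -> 'rV[CC]_n -> 'rV[CC]_n :=
  bilin (mu0_const n).

Definition tp_bracket (n : nat) (alpha : nat -> CC)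
  : 'rV[CC]_n -> 'rV[CC]_n -> 'rV[CC]_n :=
  bilin (tp_const alpha n).

Definition TP_isomorphic (n : nat) (alpha beta : nat -> CC) : Prop :=
  exists P : 'M[CC]_n, P \in unitmx /\
    (forall x y : 'rV[CC]_n,
        tp_mul (x *m P) (y *m P) = tp_mul x y *m P) /\
    (forall x y : 'rV[CC]_n,
        tp_bracket beta (x *m P) (y *m P) = tp_bracket alpha x y *m P).

Definition alpha3_only (a : CC) : nat -> CC := fun k => if k == 3%N then a else 0.

(* Main.v *)
Require Import Defs.
From Stdlib Require Reals.
From mathcomp Require Import Rstruct.
From HB Require Import structures.
From mathcomp Require Import all_boot all_order all_algebra.
From mathcomp Require Import complex ring zify.
Set Implicit Arguments. Unset Strict Implicit. Unset Printing Implicit Defensive.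
Import Order.TTheory GRing.Theory Num.Theory.
Local Open Scope ring_scope.

Notation PX := {poly CC}.
Definition dv (m : nat) (p : PX) := exists r, p = r * 'X^m.

Lemma dv0 m : dv m 0. Proof. by exists 0; rewrite mul0r. Qed.
Lemma dvD m (p q : PX) : dv m p -> dv m q -> dv m (p + q).
Proof. by move=> [r ->] [s ->]; exists (r + s); rewrite mulrDl. Qed.
Lemma dvN m (p : PX) : dv m p -> dv m (- p).
Proof. by move=> [r ->]; exists (- r); rewrite mulNr. Qed.
Lemma dvB m (p q : PX) : dv m p -> dv m q -> dv m (p - q).
Proof. by move=> hp hq; apply: dvD => //; apply: dvN. Qed.
Lemma dvMl m (p q : PX) : dv m p -> dv m (q * p).
Proof. by move=> [r ->]; exists (q * r); rewrite mulrA. Qed.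
Lemma dvMr m (p q : PX) : dv m p -> dv m (p * q).
Proof. by move=> h; rewrite mulrC; apply: dvMl. Qed.
Lemma dvM a b (p q : PX) : dv a p -> dv b q -> dv (a + b) (p * q).
Proof. by move=> [r ->] [s ->]; exists (r * s); rewrite exprD; ring. Qed.
Lemma dv_le m k (p : PX) : (m <= k)%N -> dv k p -> dv m p.
Proof.
move=> le [r ->]; exists (r * 'X^(k - m)); rewrite -mulrA -exprD subnK //.
Qed.
Lemma dvZ m c (p : PX) : dv m p -> dv m (c *: p).
Proof. by move=> h; rewrite -mul_polyC; apply: dvMl. Qed.

Lemma take_eq m (p q : PX) : take_poly m p = take_poly m q <-> dv m (p - q).
Proof.
split.
  move=> e; exists (drop_poly m p - drop_poly m q).
  rewrite -{1}(poly_take_drop m p) -{1}(poly_take_drop m q) e; ring.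
move=> [r e]; have -> : p = q + r * 'X^m by rewrite -e; ring.
by rewrite (take_polyD m q) take_polyMXn_0 addr0.
Qed.

Lemma dv_take m (p : PX) : dv m (take_poly m p - p).
Proof. by apply/take_eq; rewrite take_poly_id ?size_take_poly. Qed.

Lemma dv1E (p : PX) : dv 1 p <-> p`_0 = 0.
Proof.
split; first by move=> [r ->]; rewrite expr1 coefMX.
move=> h; exists (drop_poly 1 p); rewrite -{1}(poly_take_drop 1 p).
suff -> : take_poly 1 p = 0 by rewrite add0r.
by apply/polyP => i; rewrite coef_take_poly coef0; case: i => //=.
Qed.

Lemma dv_comp m (p f : PX) : dv m p -> dv 1 f -> dv m (p \Po f).
Proof.
move=> [r ->] [s ->]; rewrite comp_polyM comp_Xn_poly expr1 exprMn.
by exists ((r \Po (s * 'X)) * s ^+ m); rewrite mulrA.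
Qed.

Lemma dv_deriv m (p : PX) : dv m.+1 p -> dv m p^`().
Proof.
move=> [r ->]; rewrite derivM derivXn /=.
exists (r^`() * 'X + r *+ m.+1); rewrite mulrDl -mulrA -exprS; congr (_ + _); by rewrite mulrnAl mulrnAr.
Qed.

Lemma factor_comp (V a b : PX) : exists r, (V \Po a) - (V \Po b) = (a - b) * r.
Proof.
elim/poly_ind: V => [|V c [r hr]].
  by exists 0; rewrite !comp_poly0 subrr mulr0.
rewrite !comp_poly_MXaddC.
exists (r * a + (V \Po b)).
have -> : (V \Po a) * a + c%:P - ((V \Po b) * b + c%:P) =
   ((V \Po a) - (V \Po b)) * a + (V \Po b) * (a - b) by ring.
rewrite hr; ring.
Qed.

Lemma W_decomp (W : PX) : W`_0 = 0 ->
  W = (W`_1)%:P * 'X + drop_poly 2 W * 'X^2.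
Proof.
move=> h0; rewrite -{1}(poly_take_drop 2 W); congr (_ + _).
apply/polyP => i; rewrite coef_take_poly coefCM coefX.
case: i => [|[|i]] //=; by rewrite ?h0 ?mulr0 ?mulr1.
Qed.

Lemma W_comp (W q : PX) : W`_0 = 0 ->
  W \Po q = (W`_1)%:P * q + (drop_poly 2 W \Po q) * q ^+ 2.
Proof.
move=> h0; rewrite {1}(W_decomp h0) comp_polyD !comp_polyM comp_polyC comp_polyX.
by rewrite expr2.
Qed.

Lemma exists_phi (W : PX) (l : CC) : W`_0 = 0 -> W`_1 = l -> l != 0 ->
  forall N, exists u : PX, u`_0 = 1 /\
    dv N.+2 (l%:P * 'X * (u * 'X)^`() - (W \Po (u * 'X))).
Proof.
move=> h0 h1 hl; elim => [|N [u [hu0 [r hr]]]].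
  exists 1; split; first by rewrite coefC.
  rewrite mul1r derivX mulr1 (W_comp _ h0) h1 comp_polyXr.
  by exists (- drop_poly 2 W); ring.
set V := drop_poly 2 W.
set K1 := (N.+1)%:R : CC.
have hK : K1 != 0 by rewrite pnatr_eq0.
pose c : CC := - r`_0 / (l * K1).
have hc : l * c * K1 = - r`_0.
  have ht : l * K1 != 0 by rewrite mulf_neq0.
  have -> : l * c * K1 = (- r`_0 / (l * K1)) * (l * K1) by rewrite /c; ring.
  by rewrite divfK.
pose phi : PX := u * 'X.
pose h : PX := c%:P * 'X^(N.+2).
have hphi : phi = u * 'X by [].
have hh : h = c%:P * 'X^(N.+2) by [].
have dh : h^`() = c%:P * 'X^(N.+1) * (N.+2)%:R.
  by rewrite hh derivM derivC mul0r add0r derivXn /= mulr_natr mulrnAr.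
exists (u + c%:P * 'X^(N.+1)); split.
  by rewrite coefD coefCM coefXn /= mulr0 addr0.
have -> : (u + c%:P * 'X^(N.+1)) * 'X = phi + h by rewrite hphi hh mulrDl -mulrA -exprSr.
rewrite -/phi in hr.
have [s hs] := factor_comp V (phi + h) phi.
have e : V \Po (phi + h) = (V \Po phi) + h * s.
  by rewrite -(subrK (V \Po phi) (V \Po (phi + h))) hs addrAC subrr add0r addrC.
rewrite derivD dh (W_comp _ h0) h1 -/V e.
rewrite (W_comp _ h0) h1 -/V in hr.
have dphi1 : dv 1 phi by rewrite hphi; exists u; rewrite expr1.
have dh2 : dv N.+2 h by rewrite hh; apply: dvMl; exists 1; rewrite mul1r.
have hK2 : (N.+2)%:R = (K1 + 1)%:P :> PX by rewrite polyCD polyC1 /K1 rmorph_nat natr1.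
rewrite hK2 in dh *.
clearbody phi h c K1 V.
have key : l%:P * 'X * (phi^`() + c%:P * 'X^(N.+1) * (K1 + 1)%:P) -
  (l%:P * (phi + h) + ((V \Po phi) + h * s) * (phi + h) ^+ 2)
  = (r + (l * c * K1)%:P) * 'X^(N.+2) - (h * s * (phi + h) ^+ 2 + (V \Po phi) * h * (phi + phi + h)).
  apply/eqP; rewrite -subr_eq0; apply/eqP.
  rewrite !polyCM polyCD polyC1.
  transitivity ((l%:P * 'X * phi^`() - (l%:P * phi + (V \Po phi) * phi ^+ 2)) - r * 'X^(N.+2)).
    rewrite hh !exprS; ring.
  by rewrite hr subrr.
rewrite key; apply: dvB.
  have -> : N.+3 = (1 + N.+2)%N by [].
  apply: dvM; last by exists 1; rewrite mul1r.
  by apply/dv1E; rewrite coefD coefC /= hc subrr.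
apply: dvD.
  apply: (@dv_le _ (N.+2 + 2)); first by rewrite addn2.
  apply: dvM; first by apply: dvMr.
  have d1 : dv 1 (phi + h) by apply: dvD => //; apply: dv_le dh2.
  by rewrite expr2; apply: (@dvM 1 1).
have -> : N.+3 = (N.+2 + 1)%N by rewrite addn1.
apply: dvM; first by apply: dvMl.
by apply: dvD; [apply: dvD|apply: dv_le dh2].
Qed.

Definition toP n (x : 'rV[CC]_n) : PX := \sum_(i < n) x 0 i *: 'X^(i.+1).

Lemma coef_toP n (x : 'rV[CC]_n) m :
  (toP x)`_m = \sum_(k < n) x 0 k * (m == k.+1)%:R.
Proof.
rewrite /toP coef_sum; apply: eq_bigr => k _; by rewrite coefZ coefXn.
Qed.

Lemma sum_pick n (F : 'I_n -> CC) (k : 'I_n) :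
  \sum_(i < n) F i * (k.+1 == i.+1)%:R = F k.
Proof.
rewrite (bigD1 k) //= eqxx mulr1 big1 ?addr0 // => i ne.
rewrite eqSS; case: eqP => [e|]; last by rewrite mulr0.
by move: ne; rewrite (_ : k = i) ?eqxx //; apply: val_inj.
Qed.

Lemma toP_inj n (x y : 'rV[CC]_n) : toP x = toP y -> x = y.
Proof.
move=> e; apply/rowP => k; have := congr1 (fun p : PX => p`_k.+1) e.
by rewrite /= !coef_toP (sum_pick (fun i => x 0 i)) (sum_pick (fun i => y 0 i)).
Qed.

Lemma toP_bilin n c (x y : 'rV[CC]_n) :
  toP (bilin c x y) =
  \sum_(i < n) \sum_(j < n) (x 0 i * y 0 j) *: toP (\row_(k < n) c i.+1 j.+1 k.+1).
Proof.
apply/polyP => m; rewrite coef_toP coef_sum.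
rewrite /bilin.
under eq_bigr do rewrite mxE mulr_suml.
rewrite exchange_big; apply: eq_bigr => i _.
under eq_bigr do rewrite mulr_suml.
rewrite exchange_big coef_sum; apply: eq_bigr => j _.
rewrite coefZ coef_toP mulr_sumr; apply: eq_bigr => k _.
by rewrite mxE !mulrA.
Qed.

Lemma sumX n (f : nat -> CC) m :
  \sum_(k < n) f k * (m == k.+1)%:R = if (0 < m <= n)%N then f m.-1 else 0.
Proof.
case: m => [|m] /=.
  by rewrite big1 // => k _; rewrite mulr0.
case: (ltnP m n) => hm.
  have := sum_pick (fun k : 'I_n => f k) (Ordinal hm); rewrite /= => ->.
  by [].
by rewrite big1 // => k _; rewrite eqSS; case: eqP => [e|]; rewrite ?mulr0 //;
  move: (ltn_ord k); rewrite -e ltnNge hm.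
Qed.

Lemma toP_row n (f : nat -> CC) m :
  (toP (\row_(k < n) f k.+1))`_m = if (0 < m <= n)%N then f m else 0.
Proof.
rewrite coef_toP; under eq_bigr do rewrite mxE.
rewrite (@sumX n (fun k => f k.+1)); case: m => //.
Qed.

Lemma toP_mul n (x y : 'rV[CC]_n) :
  toP (tp_mul x y) = take_poly n.+1 (toP x * toP y).
Proof.
rewrite /tp_mul toP_bilin /toP mulr_suml take_poly_sum; apply: eq_bigr => i _.
rewrite mulr_sumr take_poly_sum; apply: eq_bigr => j _.
rewrite -scalerAl -scalerAr scalerA take_polyZ; congr (_ *: _).
apply/polyP => m; rewrite (@toP_row n (fun k => mu0_const n i.+1 j.+1 k)).
rewrite coef_take_poly -exprD coefXn /mu0_const.
case: eqP => [->|_]; rewrite ?andbF ?andbT; last by case: ifP; case: ifP.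
rewrite addSn ltnS /= [in RHS]ltnS; by case: (i + j.+1 < n)%N.
Qed.

Definition Wp n (alpha : nat -> CC) : PX := \poly_(s < n) alpha s.+2.

Lemma br_term (i j : nat) :
  'X^(i.+1) * ('X^(j.+1))^`() - ('X^(i.+1))^`() * 'X^(j.+1) =
  ((j.+1)%:R - (i.+1)%:R)%:P * 'X^((i + j).+1) :> PX.
Proof.
rewrite !derivXn /= polyCB !rmorph_nat !exprS exprD.
rewrite -[('X^j *+ j.+1)]mulr_natr -[('X^i *+ i.+1)]mulr_natr; ring.
Qed.

Lemma toP_br_term n alpha (i j : nat) :
  toP (\row_(k < n) tp_const alpha n i.+1 j.+1 k.+1) =
  take_poly n.+1 (Wp n alpha * ('X^(i.+1) * ('X^(j.+1))^`() - ('X^(i.+1))^`() * 'X^(j.+1))).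
Proof.
apply/polyP => m; rewrite (@toP_row n (fun k => tp_const alpha n i.+1 j.+1 k)).
rewrite br_term coef_take_poly mulrCA coefCM mulrC coefMXn coef_poly /tp_const.
case: (i + j =P 0)%N => [e|hij].
  have [-> ->] : i = 0%N /\ j = 0%N by lia.
  by rewrite subrr !mul0r mulr0 !if_same.
case: (ltnP m (i + j).+1) => hm1.
  have -> : ((i.+1 + j.+1).-1 <= m)%N = false by lia.
  by rewrite !andbF mul0r !if_same.
have [hmn|hmn] := leqP m n.
  have -> : (0 < m)%N = true by lia.
  have -> : (2 < i.+1 + j.+1)%N = true by lia.
  have -> : (i.+1 + j.+1 <= n.+1)%N = true by lia.
  have -> : ((i.+1 + j.+1).-1 <= m)%N = true by lia.
  have -> : (m < n.+1)%N = true by lia.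
  have -> : (m - (i + j).+1 < n)%N = true by lia.
  have -> : (m + 3 - (i.+1 + j.+1) = (m - (i + j).+1).+2)%N by lia.
  by rewrite mulrC.
rewrite andbF.
by have -> : (m < n.+1)%N = false by lia.
Qed.

Lemma deriv_toP n (z : 'rV[CC]_n) :
  (toP z)^`() = \sum_(i < n) z 0 i *: ('X^(i.+1))^`().
Proof.
rewrite /toP; elim/big_rec2: _ => [|i p q _ IH]; first by rewrite deriv0.
by rewrite derivD derivZ IH.
Qed.

Lemma toP_br n alpha (x y : 'rV[CC]_n) :
  toP (tp_bracket alpha x y) =
  take_poly n.+1 (Wp n alpha * (toP x * (toP y)^`() - (toP x)^`() * toP y)).
Proof.
rewrite /tp_bracket toP_bilin !deriv_toP /toP.
rewrite !mulr_suml -sumrB mulr_sumr take_poly_sum; apply: eq_bigr => i _.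
rewrite !mulr_sumr -sumrB mulr_sumr take_poly_sum; apply: eq_bigr => j _.
rewrite -!scalerAl -!scalerAr !scalerA.
by rewrite -scalerBr -scalerAr take_polyZ -toP_br_term.
Qed.

Lemma coef0X (u : PX) k : (u ^+ k)`_0 = u`_0 ^+ k.
Proof. by rewrite -!horner_coef0 horner_exp. Qed.

Definition Pm n (phi : PX) : 'M[CC]_n := \matrix_(i < n, k < n) (phi ^+ i.+1)`_k.+1.

Lemma toP_Pm n (phi : PX) (x : 'rV[CC]_n) : phi`_0 = 0 ->
  toP (x *m Pm n phi) = take_poly n.+1 (toP x \Po phi).
Proof.
move=> h0; apply/polyP => m; rewrite coef_toP.
pose f k := \sum_(i < n) x 0 i * (phi ^+ i.+1)`_k.+1.
transitivity (\sum_(k < n) f k * (m == k.+1)%:R).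
  apply: eq_bigr => k _; rewrite !mxE; congr (_ * _).
  by apply: eq_bigr => i _; rewrite mxE.
rewrite (@sumX n f) coef_take_poly /toP raddf_sum coef_sum.
case: m => [|m] /=.
  by rewrite big1 // => i _; rewrite comp_polyZ comp_Xn_poly coefZ coef0X h0 expr0n mulr0.
rewrite ltnS; case: ifP => // _; apply: eq_bigr => i _ /=.
by rewrite comp_polyZ comp_Xn_poly coefZ.
Qed.

Lemma Pm_unit n (u : PX) : u`_0 = 1 -> Pm n (u * 'X) \in unitmx.
Proof.
move=> hu.
have cf : forall i k : 'I_n, Pm n (u * 'X) i k =
    if (k < i)%N then 0 else (u ^+ i.+1)`_(k - i).
  move=> i k; rewrite mxE exprMn coefMXn ltnS subSS //.
rewrite unitmxE -det_tr det_trig; last first.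
  by apply/is_trig_mxP => i j lij; rewrite mxE cf lij.
rewrite big1 ?unitr1 // => i _; rewrite mxE cf ltnn subnn coef0X hu expr1n //.
Qed.

Lemma mul_compat m (a A b B : PX) :
  dv m (A - a) -> dv m (B - b) -> dv m (A * B - a * b).
Proof.
move=> ha hb; have -> : A * B - a * b = (A - a) * B + a * (B - b) by ring.
by apply: dvD; [apply: dvMr|apply: dvMl].
Qed.

Lemma br_abstract N (Wb A B a b Ad Bd ad bd : PX) :
  dv N.+1 (A - a) -> dv N.+1 (B - b) -> dv N (Ad - ad) -> dv N (Bd - bd) ->
  dv 1 a -> dv 1 b ->
  dv N.+1 (Wb * (A * Bd - Ad * B) - Wb * (a * bd - ad * b)).
Proof.
move=> hA hB hAd hBd ha hb.
have -> : Wb * (A * Bd - Ad * B) - Wb * (a * bd - ad * b) =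
  Wb * (((A - a) * Bd + a * (Bd - bd)) - ((Ad - ad) * B + ad * (B - b))) by ring.
have hB1 : dv 1 B by rewrite -(subrK b B); apply: dvD => //; apply: dv_le hB.
apply: dvMl; apply: dvB; apply: dvD.
- by apply: dvMr.
- by have := dvM ha hBd; rewrite add1n.
- by have := dvM hAd hB1; rewrite addn1.
- by apply: dvMl.
Qed.

Lemma toP_dv1 n (x : 'rV[CC]_n) : dv 1 (toP x).
Proof. by apply/dv1E; rewrite coef_toP big1 // => k _; rewrite mulr0. Qed.

Lemma comp_dv1 (p f : PX) : dv 1 p -> dv 1 f -> dv 1 (p \Po f).
Proof. exact: dv_comp. Qed.

Lemma Wp_alpha3 n a : (2 <= n)%N -> Wp n (alpha3_only a) = a%:P * 'X.
Proof.
move=> hn; apply/polyP => i; rewrite coef_poly coefCM coefX /alpha3_only.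
case: i => [|[|i]] /=; rewrite ?mulr0 ?mulr1 //.
all: by rewrite ?if_same ?hn.
Qed.

Unset Implicit Arguments.

Theorem mainTheorem8 (n : nat) (alpha : nat -> CC) :
  (3 <= n)%N -> alpha 2%N = 0 -> alpha 3%N != 0 ->
  exists a : CC, TP_isomorphic n alpha (alpha3_only a).
Proof.
move=> hn h2 h3.
pose W := Wp n alpha.
have hW0 : W`_0 = 0 by rewrite coef_poly; case: ifP.
have hW1 : W`_1 = alpha 3%N by rewrite coef_poly; case: ifP => // /negbT; rewrite -leqNgt; lia.
have [u [hu0 hd]] := exists_phi hW0 hW1 h3 n.-1.
have e : (n.-1.+2 = n.+1)%N by lia.
rewrite e in hd.
pose phi := u * 'X.
have hphi1 : dv 1 phi by exists u; rewrite expr1.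
have hphi0 : phi`_0 = 0 by apply/dv1E.
exists (alpha 3%N); exists (Pm n phi); split; first exact: Pm_unit.
split => x y; apply: toP_inj.
  rewrite toP_mul !toP_Pm // toP_mul; apply/take_eq.
  have sp : forall A B C D : PX, A * B - C = (A * B - D) + (D - C)
    by move=> A B C D; ring.
  rewrite (sp _ _ _ ((toP x \Po phi) * (toP y \Po phi))).
  apply: dvD.
    apply: mul_compat; apply: dv_take.
  rewrite -comp_polyM -comp_polyB; apply: dv_comp => //.
  by rewrite -opprB; apply: dvN; apply: dv_take.
rewrite toP_br !toP_Pm // toP_br Wp_alpha3; last by lia.
apply/take_eq.
set px := toP x; set py := toP y.
set Q := W * (px * py^`() - px^`() * py).
set a := px \Po phi; set b := py \Po phi.
set A := take_poly n.+1 a; set B := take_poly n.+1 b.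
have e1 : forall (X1 Y Z T : PX), X1 - T = (X1 - Y) + ((Y - Z) + (Z - T))
  by move=> X1 Y Z T; ring.
rewrite (e1 _ ((alpha 3%N)%:P * 'X * (a * b^`() - a^`() * b)) (Q \Po phi)).
apply: dvD.
  apply: br_abstract; try exact: dv_take.
  - by rewrite -derivB; apply: dv_deriv; apply: dv_take.
  - by rewrite -derivB; apply: dv_deriv; apply: dv_take.
  - by apply: comp_dv1 => //; apply: toP_dv1.
  - by apply: comp_dv1 => //; apply: toP_dv1.
apply: dvD.
  have -> : (alpha 3%N)%:P * 'X * (a * b^`() - a^`() * b) - (Q \Po phi) =
     ((alpha 3%N)%:P * 'X * phi^`() - (W \Po phi)) *
     ((px * py^`() - px^`() * py) \Po phi).
    rewrite /a /b /Q !deriv_comp comp_polyM !comp_polyB !comp_polyM; ring.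
  by apply: dvMr.
rewrite -comp_polyB; apply: dv_comp => //.
by rewrite -opprB; apply: dvN; apply: dv_take.
Qed.
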